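(* Let $M=\{M_\gamma\}_{\gamma\in\Gamma}$ and $N=\{N_\omega\}_{\omega\in\Omega}$ be defining families of functions on $\mathbb R^{k_1}$ and $\mathbb R^{k_2}$ respectively, and let $h\in\mathcal K(M\otimes N)$. Suppose $N$ satisfies: (I) for every $\omega\in\Omega$ there exist $\omega'\in\Omega$ and a bounded integrable nonnegative function $L$ on $\mathbb R^{k_2}$ with $N_\omega\le LN_{\omega'}$ and $L(y)\to0$ as $|y|\to\infty$; (II) for every $\omega\in\Omega$ there exist $\omega'\in\Omega$, a neighborhood $B$ of the origin in $\mathbb R^{k_2}$ and $C>0$ with $N_\omega(y)\le CN_{\omega'}(y+y')$ for all $y\in\mathbb R^{k_2}$, $y'\in B$. Then $h(x,\cdot)\in\mathcal K(N)$ for every $x\in\mathbb R^{k_1}$, and for every $v\in\mathcal K'(N)$ the function $h_v(x)=\langle v,h(x,\cdot)\rangle$ belongs to $\mathcal K(M)$. Moreover, for every multi-index $\mu\in\mathbb Z_+^{k_1}$, $\partial^\mu h_v(x)=\langle v,\partial^\mu_x h(x,\cdot)\rangle$.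
   Context: A defining family of functions on $\mathbb R^k$ is a family $M=\{M_\gamma\}_{\gamma\in\Gamma}$ of nonnegative measurable functions on $\mathbb R^k$, each bounded on bounded subsets of $\mathbb R^k$, such that: (a) for all $\gamma_1,\gamma_2\in\Gamma$ there are $\gamma\in\Gamma$ and $C>0$ with $M_\gamma\ge C(M_{\gamma_1}+M_{\gamma_2})$; (b) there is a countable $\Gamma'\subset\Gamma$ such that for every $\gamma\in\Gamma$ there are $\gamma'\in\Gamma'$ and $C>0$ with $CM_\gamma\le M_{\gamma'}$; (c) for every $x\in\mathbb R^k$ there are $\gamma\in\Gamma$, a neighborhood $O(x)$ of $x$ and $C>0$ with $M_\gamma(x')\ge C$ for all $x'\in O(x)$. $\mathcal K(M)$ is the space of smooth functions $f$ on $\mathbb R^k$ with finite seminorms $\|f\|_{\gamma,m}=\sup_{x\in\mathbb R^k,|\mu|\le m}M_\gamma(x)|\partial^\mu f(x)|$ for all $\gamma\in\Gamma$, $m\in\mathbb Z_+$, topologized by these seminorms; $\mathcal K'(N)$ is the continuous dual of $\mathcal K(N)$ and $\langle\cdot,\cdot\rangle$ the dual pairing. $M\otimes N$ is the family $\{(M\otimes N)_{\gamma\omega}\}_{(\gamma,\omega)\in\Gamma\times\Omega}$ on $\mathbb R^{k_1+k_2}$ given by $(M\otimes N)_{\gamma\omega}(x,y)=M_\gamma(x)N_\omega(y)$ (it is a defining family on $\mathbb R^{k_1+k_2}$). *)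

(* Defs.v *)
From HB Require Import structures.
From mathcomp Require Import all_boot all_order all_algebra.
From mathcomp Require Import all_classical all_reals all_analysis.
Set Implicit Arguments. Unset Strict Implicit. Unset Printing Implicit Defensive.
Import Order.TTheory GRing.Theory Num.Theory.
Import numFieldNormedType.Exports.
Local Open Scope classical_set_scope.
Local Open Scope ring_scope.

Section Defs.
Variable R : realType.

Definition ev (k : nat) (i : 'I_k) : 'rV[R]_k := delta_mx 0 i.

Definition pdiff (k : nat) (i : 'I_k) (f : 'rV[R]_k -> R) : 'rV[R]_k -> R :=
  fun x => 'D_(ev i) f x.

Fixpoint diter (k : nat) (s : seq 'I_k) (f : 'rV[R]_k -> R) : 'rV[R]_k -> R :=
  match s with
  | [::] => f
  | i :: s' => pdiff i (diter s' f)
  end.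

Definition mindex (k : nat) := 'I_k -> nat.
Definition msize (k : nat) (mu : mindex k) : nat := (\sum_(i < k) mu i)%N.
Definition pderiv (k : nat) (mu : mindex k) (f : 'rV[R]_k -> R) : 'rV[R]_k -> R :=
  diter (flatten [seq nseq (mu i) i | i <- enum 'I_k]) f.

Definition smooth (k : nat) (f : 'rV[R]_k -> R) : Prop :=
  forall s : seq 'I_k, continuous (diter s f) /\
    forall (i : 'I_k) (x : 'rV[R]_k), derivable (diter s f) x (ev i).

Definition borel_measurable (k : nat) (f : 'rV[R]_k -> R) : Prop :=
  forall U : set R, open U -> <<s (@open 'rV[R]_k) >> (f @^-1` U).

(* Lebesgue integral over R^k of a nonnegative Borel function, written as the
   iterated one-dimensional Lebesgue integral (Tonelli). *)
Fixpoint iterint (n : nat) (F : seq R -> \bar R) : \bar R :=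
  match n with
  | O => F [::]
  | n'.+1 => (\int[@lebesgue_measure R]_t iterint n' (fun s => F (t :: s)))%E
  end.
Definition vec_of_seq (k : nat) (s : seq R) : 'rV[R]_k := \row_i nth 0 s i.
Definition integral_Rk (k : nat) (f : 'rV[R]_k -> R) : \bar R :=
  iterint k (fun s => (f (vec_of_seq k s))%:E).

Definition defining_family (k : nat) (G : Type) (M : G -> 'rV[R]_k -> R) : Prop :=
  (forall g x, 0 <= M g x) /\
  (forall g, borel_measurable (M g)) /\
  (forall g (r : R), exists B : R, forall x, `|x| <= r -> M g x <= B) /\
  (forall g1 g2, exists g (C : R), 0 < C /\ forall x, C * (M g1 x + M g2 x) <= M g x) /\
  (exists G' : set G, countable G' /\
     forall g, exists2 g', G' g' & exists C : R, 0 < C /\ forall x, C * M g x <= M g' x) /\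
  (forall x : 'rV[R]_k, exists g (C : R), 0 < C /\ \forall x' \near x, C <= M g x').

Definition seminorm (k : nat) (G : Type) (M : G -> 'rV[R]_k -> R) (g : G) (m : nat)
    (f : 'rV[R]_k -> R) : \bar R :=
  ereal_sup [set r | exists (x : 'rV[R]_k) (mu : mindex k),
     (msize mu <= m)%N /\ r = (M g x * `|pderiv mu f x|)%:E].

Definition inK (k : nat) (G : Type) (M : G -> 'rV[R]_k -> R) (f : 'rV[R]_k -> R) : Prop :=
  smooth f /\ forall g m, (seminorm M g m f < +oo)%E.

(* v is an element of K'(M): a linear functional on K(M), continuous for the
   locally convex topology generated by the seminorms ||.||_{g,m}, i.e. bounded
   by a constant times the maximum of finitely many of these seminorms. *)
Definition in_dual (k : nat) (G : Type) (M : G -> 'rV[R]_k -> R)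
    (v : ('rV[R]_k -> R) -> R) : Prop :=
  (forall (a : R) f1 f2, inK M f1 -> inK M f2 ->
      v (fun y => a * f1 y + f2 y) = a * v f1 + v f2) /\
  (exists (s : seq (G * nat)) (C : R), 0 <= C /\
      forall f, inK M f ->
        ((`|v f|)%:E <= C%:E * \big[Order.max/0%E]_(p <- s) seminorm M p.1 p.2 f)%E).

Definition tensor_family (k1 k2 : nat) (G O : Type)
    (M : G -> 'rV[R]_k1 -> R) (N : O -> 'rV[R]_k2 -> R) :
    G * O -> 'rV[R]_(k1 + k2) -> R :=
  fun p z => M p.1 (lsubmx z) * N p.2 (rsubmx z).

Definition condI (k : nat) (O : Type) (N : O -> 'rV[R]_k -> R) : Prop :=
  forall w, exists w' (L : 'rV[R]_k -> R),
    (forall y, 0 <= L y) /\ borel_measurable L /\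
    (exists B : R, forall y, L y <= B) /\
    (integral_Rk L < +oo)%E /\
    (forall y, N w y <= L y * N w' y) /\
    (forall eps : R, 0 < eps -> exists r : R, forall y, r < `|y| -> L y < eps).

Definition condII (k : nat) (O : Type) (N : O -> 'rV[R]_k -> R) : Prop :=
  forall w, exists w' (B : set 'rV[R]_k) (C : R),
    nbhs (0 : 'rV[R]_k) B /\ 0 < C /\
    forall y y', B y' -> N w y <= C * N w' (y + y').

End Defs.

(* Main.v *)
Require Import Defs.
From HB Require Import structures.
From mathcomp Require Import all_boot all_order all_algebra.
From mathcomp Require Import all_classical all_reals all_analysis.
From mathcomp.algebra_tactics Require Import ring lra.
Import Order.TTheory GRing.Theory Num.Theory.
Import numFieldNormedType.Exports.
Local Open Scope classical_set_scope.
Local Open Scope ring_scope.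


Section Basics.
Variable R : realType.

Lemma diter_cat n (s1 s2 : seq 'I_n) (f : 'rV[R]_n -> R) :
  diter (s1 ++ s2) f = diter s1 (diter s2 f).
Proof. by elim: s1 => //= i s1 ->. Qed.

Lemma smooth_diter n (s : seq 'I_n) (f : 'rV[R]_n -> R) :
  smooth f -> smooth (diter s f).
Proof. by move=> sf s'; rewrite -diter_cat; apply: sf. Qed.

Lemma smooth_pdiff n (i : 'I_n) (f : 'rV[R]_n -> R) :
  smooth f -> smooth (pdiff i f).
Proof. by move=> sf; apply: (smooth_diter _ [:: i]). Qed.

Lemma line_quot n (f : 'rV[R]_n -> R) (z E : 'rV[R]_n) (s : R) :
  (fun h : R => h^-1 *: (((fun t : R => f (z + t *: E)) \o shift s) (h *: 1)
      - f (z + s *: E))) =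
  (fun h => h^-1 *: ((f \o shift (z + s *: E)) (h *: E) - f (z + s *: E))).
Proof.
by apply/funext => h /=; rewrite /shift scaler1 scalerDl addrCA.
Qed.

Lemma derivable_line n (f : 'rV[R]_n -> R) (z E : 'rV[R]_n) (s : R) :
  derivable f (z + s *: E) E -> derivable (fun t : R => f (z + t *: E)) s 1.
Proof. by rewrite /derivable line_quot. Qed.

Lemma derive_line n (f : 'rV[R]_n -> R) (z E : 'rV[R]_n) (s : R) :
  'D_1 (fun t : R => f (z + t *: E)) s = 'D_E f (z + s *: E).
Proof. by rewrite /derive line_quot. Qed.

Lemma lip1 (phi : R -> R) (t B : R) :
  (forall s, derivable phi s 1) ->
  (forall s, `|s| <= `|t| -> `|'D_1 phi s| <= B) ->
  `|phi t - phi 0| <= B * `|t|.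
Proof.
move=> dphi bnd.
have cont : forall a b, {within `[a, b], continuous phi}.
  move=> a b; apply: derivable_within_continuous => x _; exact: dphi.
have isd : forall a b : R, (forall x, x \in `]a, b[ -> is_derive x 1 phi ('D_1 phi x)).
  by move=> a b x _; apply: derivableP.
have [t0|t0] := leP 0 t.
  have [c /andP[c0 ct] ->] := MVT_segment t0 (isd 0 t) (cont 0 t).
  rewrite subr0 normrM (ger0_norm t0); apply: ler_wpM2r => //.
  apply: bnd; rewrite (ger0_norm t0).
  move: c0 ct; rewrite !bnd_simp => c0 ct.
  by rewrite ger0_norm.
have t0' : t <= 0 by apply: ltW.
have [c /andP[c0 ct] E] := MVT_segment t0' (isd t 0) (cont t 0).
rewrite distrC E sub0r normrM normrN; apply: ler_wpM2r => //.
apply: bnd; move: c0 ct; rewrite !bnd_simp => c0 ct.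
rewrite (ltr0_norm t0) ler_norml; apply/andP; split; first by rewrite opprK.
by rewrite (le_trans ct) // oppr_ge0.
Qed.

Lemma lip1w (phi : R -> R) (c t B : R) : 0 <= c ->
  (forall s, derivable phi s 1) ->
  (forall s, `|s| <= `|t| -> c * `|'D_1 phi s| <= B) ->
  c * `|phi t - phi 0| <= B * `|t|.
Proof.
move=> c0 dphi bnd.
have B0 : 0 <= B.
  apply: le_trans (bnd 0 _); first by rewrite mulr_ge0.
  by rewrite normr0.
have [->|cn0] := eqVneq c 0; first by rewrite mul0r mulr_ge0.
have cp : 0 < c by rewrite lt_def cn0 c0.
rewrite -ler_pdivlMl // mulrA; apply: lip1 => // s st.
by rewrite ler_pdivlMl // bnd.
Qed.

End Basics.

Section Schwarz.
Variable R : realType.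

Lemma small_eq0 (x : R) : (forall e : R, 0 < e -> `|x| < e) -> x = 0.
Proof.
move=> H; apply/eqP; apply/negPn/negP => xn0.
by have := H `|x|; rewrite normr_gt0 xn0 ltxx => /(_ isT).
Qed.

Lemma norm_ev n (i : 'I_n) : `|ev R i| <= 1.
Proof.
rewrite [leLHS]/Num.norm /= mx_normrE; apply/bigmax_leP; split => // -[a b] _ /=.
by rewrite /ev mxE; case: eqP => _; case: eqP => _ /=; rewrite ?normr1 ?normr0.
Qed.

Lemma entry_le_norm m n (A : 'M[R]_(m, n)) i j : `|A i j| <= `|A|.
Proof.
by rewrite [leRHS]/Num.norm /= mx_normrE; apply/bigmax_geP; right; exists (i, j).
Qed.

Lemma mvt_line n (f : 'rV[R]_n -> R) (z E : 'rV[R]_n) (t : R) : 0 <= t ->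
  (forall s, derivable f (z + s *: E) E) ->
  exists c, [/\ 0 <= c, c <= t & f (z + t *: E) - f z = 'D_E f (z + c *: E) * t].
Proof.
move=> t0 df.
pose phi := fun s : R => f (z + s *: E).
have dphi : forall s, derivable phi s 1 by move=> s; apply: derivable_line.
have cont : {within `[0, t], continuous phi}.
  by apply: derivable_within_continuous => x _; exact: dphi.
have isd : forall x, x \in `]0, t[ -> is_derive x 1 phi ('D_1 phi x).
  by move=> x _; apply: derivableP.
have [c /andP[c0 ct] E'] := MVT_segment t0 isd cont.
exists c; split => //.
move: E'; rewrite /phi derive_line subr0 scale0r addr0 => <- //.
Qed.

Lemma derive_transl n (f : 'rV[R]_n -> R) (u w E : 'rV[R]_n) :
  'D_E (fun x => f (x + u)) w = 'D_E f (w + u) /\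
  (derivable f (w + u) E -> derivable (fun x => f (x + u)) w E).
Proof.
rewrite /derive /derivable.
have -> : (fun h : R => h^-1 *: (((fun x => f (x + u)) \o shift w) (h *: E) - f (w + u))) =
   (fun h : R => h^-1 *: ((f \o shift (w + u)) (h *: E) - f (w + u))).
  by apply/funext => h /=; rewrite /shift addrA.
by [].
Qed.

Lemma delta_rep n (f : 'rV[R]_n -> R) (sf : smooth f) (a : 'rV[R]_n) i j (t : R) :
  0 < t -> exists p, `|p - a| <= t + t /\
  f (a + t *: ev R j + t *: ev R i) - f (a + t *: ev R i)
     - (f (a + t *: ev R j) - f a) = t * t * pdiff j (pdiff i f) p.
Proof.
move=> t0; have t0' := ltW t0.
pose g := (fun x => f (x + t *: ev R j)) - f.
have dg : forall w, derivable g w (ev R i).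
  move=> w; apply: derivableB; last exact: (sf [::]).2.
  by apply: (derive_transl _ f (t *: ev R j) w (ev R i)).2; exact: (sf [::]).2.
have [c [c0 ct Ec]] := mvt_line _ g a (ev R i) t t0' (fun s => dg _).
have Dg : 'D_(ev R i) g (a + c *: ev R i) =
   pdiff i f (a + c *: ev R i + t *: ev R j) - pdiff i f (a + c *: ev R i).
  rewrite deriveB //; last exact: (sf [::]).2.
  - by rewrite (derive_transl _ f (t *: ev R j) _ (ev R i)).1.
  - by apply: (derive_transl _ f (t *: ev R j) _ (ev R i)).2; exact: (sf [::]).2.
have [d [d0 dt Ed]] := mvt_line _ _ (a + c *: ev R i) (ev R j) t t0'
   (fun s => (sf [:: i]).2 j _).
exists (a + c *: ev R i + d *: ev R j); split.
  rewrite addrAC [a + _ - a]addrAC subrr add0r (le_trans (ler_normD _ _)) // lerD //.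
    rewrite normrZ (ger0_norm c0) -[leRHS]mulr1 ler_pM //; exact: norm_ev.
  rewrite normrZ (ger0_norm d0) -[leRHS]mulr1 ler_pM //; exact: norm_ev.
have := Ec; rewrite Dg /= => Ec'.
move: Ed; rewrite /= => Ed.
rewrite Ed in Ec'.
rewrite [a + t *: ev R j + _]addrAC.
transitivity (g (a + t *: ev R i) - g a); first by [].
by rewrite Ec' /pdiff; ring.
Qed.

Lemma tri_half (X Y Z W e : R) : W = Z -> `|X - Z| < e / 2 -> `|Y - W| < e / 2 ->
  `|X - Y| < e.
Proof.
move=> -> h1 h2; rewrite (_ : X - Y = (X - Z) + (Z - Y)); last by ring.
by rewrite (le_lt_trans (ler_normD _ _)) // [e]splitr ltrD // distrC.
Qed.

Lemma schwarz n (f : 'rV[R]_n -> R) (sf : smooth f) i j :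
  pdiff i (pdiff j f) = pdiff j (pdiff i f).
Proof.
apply/funext => a; apply/eqP; rewrite -subr_eq0; apply/eqP/small_eq0 => e e0.
have e2 : 0 < e / 2 by rewrite divr_gt0.
have ball_of : forall (P : 'rV[R]_n -> R), continuous P ->
    exists2 d : R, 0 < d & forall p, `|p - a| < d -> `|P a - P p| < e / 2.
  move=> P cP; have /cvgrPdist_lt/(_ _ e2) := cP a.
  case/nbhs_ballP => d d0 sub; exists d => // p pa; apply: sub.
  by rewrite -ball_normE /= distrC.
have [d1 d10 H1] := ball_of _ (sf [:: i; j]).1.
have [d2 d20 H2] := ball_of _ (sf [:: j; i]).1.
pose d := Num.min d1 d2.
have d0 : 0 < d by rewrite lt_min d10 d20.
pose t := d / 4.
have t0 : 0 < t by rewrite divr_gt0.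
have ttd : t + t < d by rewrite /t; lra.
have [p1 [p1a E1]] := delta_rep _ f sf a i j t t0.
have [p2 [p2a E2]] := delta_rep _ f sf a j i t t0.
have E : pdiff j (pdiff i f) p1 = pdiff i (pdiff j f) p2.
  apply: (mulfI (x := t * t)); first by rewrite mulf_neq0 // gt_eqF.
  apply: (etrans (esym E1)); apply: (etrans _ E2).
  rewrite [a + t *: ev R i + _]addrAC.
  set A := f _; set B := f (a + t *: ev R i); set C := f (a + t *: ev R j).
  ring.
have dd1 : d <= d1 by rewrite ge_min lexx.
have dd2 : d <= d2 by rewrite ge_min lexx orbT.
have lt1 : `|p2 - a| < d1 := le_lt_trans p2a (lt_le_trans ttd dd1).
have lt2 : `|p1 - a| < d2 := le_lt_trans p1a (lt_le_trans ttd dd2).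
have h1 := H1 _ lt1. have h2 := H2 _ lt2. exact (tri_half (pdiff i (pdiff j f) a) (pdiff j (pdiff i f) a) _ _ e E h1 h2).
Qed.

End Schwarz.

Section Perm.
Variable R : realType.

Lemma diter_front n (f : 'rV[R]_n -> R) (sf : smooth f) (j : 'I_n) s1 s2 :
  diter (s1 ++ j :: s2) f = diter (j :: s1 ++ s2) f.
Proof.
elim: s1 => //= x s1 IH; rewrite IH /=.
by rewrite schwarz //; apply: smooth_diter.
Qed.

Lemma diter_perm n (f : 'rV[R]_n -> R) (sf : smooth f) (s s' : seq 'I_n) :
  perm_eq s s' -> diter s f = diter s' f.
Proof.
elim: s' s => [|j s' IH] s pss'.
  by move: pss' => /perm_nilP ->.
have js : j \in s by rewrite (perm_mem pss') mem_head.
case: (splitPr js) pss' => s1 s2 pss'.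
rewrite diter_front //= (IH (s1 ++ s2)) //.
by rewrite -(perm_cons j); apply: perm_trans pss'; rewrite perm_sym (perm_catCA s1 [:: j] s2).
Qed.

Definition cnt n (s : seq 'I_n) : mindex n := fun i => count_mem i s.
Arguments cnt {n}.

Lemma count_sum n (p : pred 'I_n) (s : seq 'I_n) :
  count p s = (\sum_(i < n) count_mem i s * p i)%N.
Proof.
elim: s => [|x s IH] /=; first by rewrite big1.
rewrite IH.
under [RHS]eq_bigr => i _ do rewrite mulnDl.
rewrite big_split /=; congr (_ + _)%N.
rewrite (bigD1 x) //= eqxx mul1n big1 ?addn0 // => i /negbTE.
by rewrite eq_sym => ->.
Qed.

Lemma perm_cnt n (s : seq 'I_n) :
  perm_eq (flatten [seq nseq (cnt s i) i | i <- enum 'I_n]) s.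
Proof.
apply/permP => p; rewrite count_flatten -map_comp count_sum.
rewrite sumnE big_map big_enum /=; apply: eq_bigr => i _.
by rewrite count_nseq mulnC.
Qed.

Lemma msize_cnt n (s : seq 'I_n) : msize (cnt s) = size s.
Proof.
rewrite /msize -count_predT count_sum; apply: eq_bigr => i _.
by rewrite muln1.
Qed.

Lemma diter_pderiv n (f : 'rV[R]_n -> R) (sf : smooth f) (s : seq 'I_n) :
  diter s f = pderiv (cnt s) f.
Proof. by rewrite /pderiv (diter_perm _ f sf _ _ (perm_cnt _ s)). Qed.

End Perm.

Section Row.
Variable R : realType.

Lemma quot_comp m n (g : 'rV[R]_n -> R) (phi : 'rV[R]_m -> 'rV[R]_n) a e E :
  (forall h : R, phi (h *: e + a) = h *: E + phi a) ->
  'D_e (g \o phi) a = 'D_E g (phi a) /\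
  (derivable (g \o phi) a e <-> derivable g (phi a) E).
Proof.
move=> hphi; rewrite /derive /derivable.
have -> : (fun h : R => h^-1 *: (((g \o phi) \o shift a) (h *: e) - (g \o phi) a)) =
   (fun h : R => h^-1 *: ((g \o shift (phi a)) (h *: E) - g (phi a))).
  by apply/funext => h /=; rewrite /shift hphi.
by [].
Qed.

Lemma norm_row_mx k1 k2 (a : 'rV[R]_k1) (b : 'rV[R]_k2) :
  `|row_mx a b| <= `|a| + `|b|.
Proof.
rewrite [leLHS]/Num.norm /= mx_normrE; apply/bigmax_leP; split => [|[i j] _ /=].
  by rewrite addr_ge0.
rewrite mxE; case: splitP => l _.
  by rewrite (le_trans (entry_le_norm _ _ _ a i l)) // lerDl.
by rewrite (le_trans (entry_le_norm _ _ _ b i l)) // lerDr.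
Qed.

Lemma cont_rowr k1 k2 (x : 'rV[R]_k1) : continuous (fun y : 'rV[R]_k2 => row_mx x y).
Proof.
move=> y0; apply/(@cvgrPdist_lt _ _ _ (nbhs y0) (nbhs_filter y0)) => e e0; apply/nbhs_ballP; exists e => // y.
rewrite -ball_normE /= => hy.
rewrite opp_row_mx add_row_mx subrr.
by rewrite (le_lt_trans (norm_row_mx _ _ _ _)) // normr0 add0r.
Qed.

Lemma cont_rowl k1 k2 (y : 'rV[R]_k2) : continuous (fun x : 'rV[R]_k1 => row_mx x y).
Proof.
move=> x0; apply/(@cvgrPdist_lt _ _ _ (nbhs x0) (nbhs_filter x0)) => e e0; apply/nbhs_ballP; exists e => // x.
rewrite -ball_normE /= => hx.
rewrite opp_row_mx add_row_mx subrr.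
by rewrite (le_lt_trans (norm_row_mx _ _ _ _)) // normr0 addr0.
Qed.

Lemma rowr_shift k1 k2 (x : 'rV[R]_k1) (y : 'rV[R]_k2) i (h : R) :
  row_mx x (h *: ev R i + y) = h *: ev R (@rshift k1 k2 i) + row_mx x y.
Proof. by rewrite /ev delta_mx_rshift scale_row_mx add_row_mx scaler0 add0r. Qed.

Lemma rowl_shift k1 k2 (x : 'rV[R]_k1) (y : 'rV[R]_k2) i (h : R) :
  row_mx (h *: ev R i + x) y = h *: ev R (@lshift k1 k2 i) + row_mx x y.
Proof. by rewrite /ev delta_mx_lshift scale_row_mx add_row_mx scaler0 add0r. Qed.

Lemma diter_rowr k1 k2 (f : 'rV[R]_(k1 + k2) -> R) (x : 'rV[R]_k1) s :
  diter s (fun y => f (row_mx x y)) =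
  (fun y => diter (map (@rshift k1 k2) s) f (row_mx x y)).
Proof.
elim: s => //= i s IH; rewrite IH; apply/funext => y.
exact: (quot_comp _ _ (diter (map (@rshift k1 k2) s) f) (fun y => row_mx x y) y
   (ev R i) (ev R (@rshift k1 k2 i)) (fun h => rowr_shift _ _ x y i h)).1.
Qed.

Lemma diter_rowl k1 k2 (f : 'rV[R]_(k1 + k2) -> R) (y : 'rV[R]_k2) s :
  diter s (fun x => f (row_mx x y)) =
  (fun x => diter (map (@lshift k1 k2) s) f (row_mx x y)).
Proof.
elim: s => //= i s IH; rewrite IH; apply/funext => x.
exact: (quot_comp _ _ (diter (map (@lshift k1 k2) s) f) (fun x => row_mx x y) x
   (ev R i) (ev R (@lshift k1 k2 i)) (fun h => rowl_shift _ _ x y i h)).1.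
Qed.

Lemma smooth_rowr k1 k2 (f : 'rV[R]_(k1 + k2) -> R) (x : 'rV[R]_k1) :
  smooth f -> smooth (fun y => f (row_mx x y)).
Proof.
move=> sf s; rewrite diter_rowr; split.
  move=> y; apply: continuous_comp; first exact: cont_rowr.
  exact: (sf _).1.
move=> i y.
apply: ((quot_comp _ _ (diter (map (@rshift k1 k2) s) f) (fun y => row_mx x y) y
   (ev R i) (ev R (@rshift k1 k2 i)) (fun h => rowr_shift _ _ x y i h)).2).2.
exact: (sf _).2.
Qed.

End Row.

Section Util.
Variable R : realType.

Lemma size_canon n (mu : mindex n) :
  size (flatten [seq nseq (mu i) i | i <- enum 'I_n]) = msize mu.
Proof.
rewrite size_flatten /shape -map_comp sumnE big_map big_enum /=.
by apply: eq_bigr => i _; rewrite /= size_nseq.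
Qed.

Lemma sem_le k (T : Type) (M' : T -> 'rV[R]_k -> R) g m f (B : R) :
  (forall x mu, (msize mu <= m)%N -> M' g x * `|pderiv mu f x| <= B) ->
  (seminorm M' g m f <= B%:E)%E.
Proof.
move=> H; apply: ge_ereal_sup => _ [x [mu [hm ->]]].
by rewrite lee_fin H.
Qed.

Lemma sem_ub k (T : Type) (M' : T -> 'rV[R]_k -> R) g m f :
  (seminorm M' g m f < +oo)%E ->
  exists B : R, forall x mu, (msize mu <= m)%N -> M' g x * `|pderiv mu f x| <= B.
Proof.
move=> hs.
have ub : forall x mu, (msize mu <= m)%N ->
    ((M' g x * `|pderiv mu f x|)%:E <= seminorm M' g m f)%E.
  by move=> x mu hm; apply: ereal_sup_ubound; exists x, mu.
move: hs ub; case: (seminorm M' g m f) => [r | // | ] _ ub.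
  by exists r => x mu hm; rewrite -lee_fin ub.
by exists 0 => x mu hm; have := ub x mu hm; rewrite leeNy_eq.
Qed.

Lemma diter_comb n (a : R) (f1 f2 : 'rV[R]_n -> R) :
  smooth f1 -> smooth f2 -> forall s,
  diter s (fun y => a * f1 y + f2 y) = (fun y => a * diter s f1 y + diter s f2 y).
Proof.
move=> s1 s2; elim => //= i s IH; rewrite IH; apply/funext => y.
have -> : (fun y => a * diter s f1 y + diter s f2 y) =
   (a \*: diter s f1) + diter s f2 by apply/funext.
rewrite /pdiff deriveD ?deriveZ //.
- exact: ((s1 s).2 i y).
- exact: (@derivableZ _ _ _ (diter s f1) a y (ev R i) ((s1 s).2 i y)).
- exact: ((s2 s).2 i y).
Qed.

Lemma smooth_comb n (a : R) (f1 f2 : 'rV[R]_n -> R) :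
  smooth f1 -> smooth f2 -> smooth (fun y => a * f1 y + f2 y).
Proof.
move=> s1 s2 s; rewrite diter_comb //.
have -> : (fun y => a * diter s f1 y + diter s f2 y) =
   (a \*: diter s f1) + diter s f2 by apply/funext.
split.
  move=> y; apply: continuousD; last exact: ((s2 s).1 y).
  exact: (continuousZl_tmp ((s1 s).1 y)).
move=> i y.
apply: derivableD; last exact: ((s2 s).2 i y).
exact: (@derivableZ _ _ _ (diter s f1) a y (ev R i) ((s1 s).2 i y)).
Qed.

Lemma inK_comb k (T : Type) (M' : T -> 'rV[R]_k -> R) (M0 : forall g x, 0 <= M' g x)
  (a : R) f1 f2 : inK M' f1 -> inK M' f2 -> inK M' (fun y => a * f1 y + f2 y).
Proof.
move=> [s1 b1] [s2 b2]; split; first exact: smooth_comb.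
move=> g m.
have [B1 H1] := sem_ub _ _ _ _ _ _ (b1 g m).
have [B2 H2] := sem_ub _ _ _ _ _ _ (b2 g m).
apply: (@le_lt_trans _ _ (`|a| * B1 + B2)%:E); last by rewrite ltry.
apply: sem_le => x mu hm; rewrite /pderiv diter_comb //.
apply: (le_trans (y := M' g x * (`|a| * `|pderiv mu f1 x| + `|pderiv mu f2 x|))).
  apply: ler_wpM2l => //; rewrite (le_trans (ler_normD _ _)) //.
  by rewrite normrM.
rewrite mulrDr lerD // ?H2 // mulrCA ler_wpM2l //.
exact: H1.
Qed.

Lemma uniform_bound (T : Type) (s : seq T) (Q : T -> R -> Prop) :
  (forall p S S', S <= S' -> Q p S -> Q p S') ->
  (forall p, exists S, Q p S) ->
  exists S, 0 <= S /\ forall p, List.In p s -> Q p S.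
Proof.
move=> mono ex; elim: s => [|p s [S [S0 HS]]]; first by exists 0.
have [Sp HSp] := ex p.
exists (Num.max S Sp); split; first by rewrite le_max S0.
move=> q /= [<-|qs].
  by apply: mono HSp; rewrite le_max lexx orbT.
by apply: mono (HS _ qs); rewrite le_max lexx.
Qed.

End Util.

Section Taylor.
Variable R : realType.

Lemma lip_line n (H : 'rV[R]_n -> R) (sH : smooth H) (L : 'I_n) z (c t B : R) :
  0 <= c -> (forall s, `|s| <= `|t| -> c * `|pdiff L H (z + s *: ev R L)| <= B) ->
  c * `|H (z + t *: ev R L) - H z| <= B * `|t|.
Proof.
move=> c0 hb.
have := lip1w _ (fun s => H (z + s *: ev R L)) c t B c0
  (fun s => derivable_line _ _ H z (ev R L) s ((sH [::]).2 L _)).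
rewrite /= scale0r addr0; apply => s hs.
by rewrite derive_line; apply: hb.
Qed.

Lemma taylor2 n (H : 'rV[R]_n -> R) (sH : smooth H) (L : 'I_n) z (c t B : R) :
  0 <= c ->
  (forall s, `|s| <= `|t| -> c * `|pdiff L (pdiff L H) (z + s *: ev R L)| <= B) ->
  c * `|H (z + t *: ev R L) - H z - t * pdiff L H z| <= B * (`|t| * `|t|).
Proof.
move=> c0 hb.
set a := pdiff L H z.
pose phi1 := fun s : R => H (z + s *: ev R L).
pose phi := phi1 - a \*: (@id R).
have d1 : forall s, derivable phi1 s 1.
  by move=> s; apply: derivable_line; exact: ((sH [::]).2 L _).
have isd : forall s : R, is_derive s 1 phi ('D_1 phi1 s - a *: 1).
  move=> s; apply: is_deriveB; first exact: derivableP.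
have E1 : phi t - phi 0 = (H (z + t *: ev R L) - a * t) - (H (z + 0 *: ev R L) - a * 0) by [].
rewrite scale0r addr0 mulr0 subr0 [a * t]mulrC in E1.
have Dphi : forall s, 'D_1 phi s = pdiff L H (z + s *: ev R L) - a.
  move=> s; rewrite (isd s).(derive_val) /phi1 derive_line; congr (_ - _); exact: mulr1.
have -> : H (z + t *: ev R L) - H z - t * a = phi t - phi 0 by rewrite E1; lra.
rewrite mulrA; apply: lip1w => //.
move=> s hs; rewrite Dphi.
have := lip1w _ (fun s => pdiff L H (z + s *: ev R L)) c s B c0
  (fun s' => derivable_line _ _ _ z (ev R L) s' ((sH [:: L]).2 L _)).
rewrite /= scale0r addr0 => h.
have B0 : 0 <= B.
  apply: le_trans (hb 0 _); first by rewrite mulr_ge0.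
  by rewrite normr0.
apply: le_trans (h _) _.
  move=> s' hs'; rewrite derive_line; apply: hb.
  exact: le_trans hs' hs.
by rewrite ler_wpM2l.
Qed.

End Taylor.

Section Path.
Variable R : realType.

Lemma path_bound k1 k2 (H : 'rV[R]_(k1 + k2) -> R) (sH : smooth H)
  (x : 'rV[R]_k1) (y : 'rV[R]_k2) (c B r : R) :
  0 <= c -> 0 <= B ->
  (forall q l, `|q - x| <= r -> c * `|pdiff (@lshift k1 k2 l) H (row_mx q y)| <= B) ->
  forall x', (k1.+1)%:R * `|x' - x| <= r ->
  c * `|H (row_mx x' y) - H (row_mx x y)| <= k1%:R * B * `|x' - x|.
Proof.
move=> c0 B0 hb x' hr.
set d := x' - x.
have claim : forall s : seq 'I_k1, (size s <= k1)%N ->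
   `|x + \sum_(l <- s) d 0 l *: ev R l - x| <= (size s)%:R * `|d| /\
   c * `|H (row_mx (x + \sum_(l <- s) d 0 l *: ev R l) y) - H (row_mx x y)|
     <= (size s)%:R * B * `|d|.
  elim => [|l s IH] /= hs.
    by rewrite big_nil addr0 !subrr !normr0 !mul0r mulr0; split.
  have hs' : (size s <= k1)%N by apply: ltnW.
  have [IH1 IH2] := IH hs'.
  set p := x + \sum_(j <- s) d 0 j *: ev R j.
  have pe : x + \sum_(j <- l :: s) d 0 j *: ev R j = p + d 0 l *: ev R l.
    by rewrite big_cons addrCA addrC.
  rewrite pe.
  have dl : `|d 0 l| <= `|d| := entry_le_norm _ _ _ d 0 l.
  have evn : `|ev R l| <= 1 by apply: norm_ev.
  have step : forall tau, `|tau| <= `|d 0 l| ->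
      `|p + tau *: ev R l - x| <= (size s).+1%:R * `|d|.
    move=> tau ht; rewrite addrAC (le_trans (ler_normD _ _)) // normrZ.
    rewrite -natr1 mulrDl mul1r lerD //.
    rewrite (le_trans (ler_wpM2l (normr_ge0 _) evn)) // mulr1.
    exact: le_trans ht dl.
  split; first exact: step.
  have e1 : forall tau, row_mx (p + tau *: ev R l) y = row_mx p y + tau *: ev R (@lshift k1 k2 l).
    by move=> tau; rewrite addrC rowl_shift addrC.
  have lip := lip_line _ _ H sH (@lshift k1 k2 l) (row_mx p y) c (d 0 l) B c0.
  have lip' : c * `|H (row_mx p y + d 0 l *: ev R (@lshift k1 k2 l)) - H (row_mx p y)|
      <= B * `|d 0 l|.
    apply: lip => tau ht; rewrite -e1; apply: hb.
    apply: le_trans (step _ ht) _; apply: le_trans hr.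
    by apply: ler_wpM2r => //; rewrite ler_nat; apply: leqW.
  rewrite e1.
  rewrite (_ : H _ - H (row_mx x y) =
     (H (row_mx p y + d 0 l *: ev R (@lshift k1 k2 l)) - H (row_mx p y)) +
     (H (row_mx p y) - H (row_mx x y))); last by rewrite addrA subrK.
  rewrite (le_trans (ler_wpM2l c0 (ler_normD _ _))) // mulrDr.
  rewrite -natr1 mulrDl mulrDl mul1r [X in _ <= X]addrC.
  apply: lerD; last exact: IH2.
  by rewrite (le_trans lip') // ler_wpM2l.
have [_] := claim (enum 'I_k1) (eq_leq (size_enum_ord k1)).
rewrite size_enum_ord big_enum /=.
have -> : \sum_(l < k1) d 0 l *: ev R l = d.
  by rewrite /ev [RHS](matrix_sum_delta d) big_ord1.
have -> : x + d = x' by rewrite /d addrC subrK.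
by [].
Qed.

End Path.

Section Util2.
Variable R : realType.

Lemma diter_comb3 n (a b c : R) (f1 f2 f3 : 'rV[R]_n -> R) :
  smooth f1 -> smooth f2 -> smooth f3 -> forall s,
  diter s (fun y => a * f1 y + (b * f2 y + c * f3 y)) =
  (fun y => a * diter s f1 y + (b * diter s f2 y + c * diter s f3 y)).
Proof.
move=> s1 s2 s3; elim => //= i s IH; rewrite IH; apply/funext => y.
have -> : (fun y => a * diter s f1 y + (b * diter s f2 y + c * diter s f3 y)) =
   (a \*: diter s f1) + ((b \*: diter s f2) + (c \*: diter s f3)) by apply/funext.
have h1 := derivableP ((s1 s).2 i y).
have h2 := derivableP ((s2 s).2 i y).
have h3 := derivableP ((s3 s).2 i y).
have := @is_deriveD _ _ _ _ _ y (ev R i) _ _ (is_deriveZ a h1)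
          (is_deriveD (is_deriveZ b h2) (is_deriveZ c h3)).
by rewrite /pdiff; case => _ ->.
Qed.

Lemma smooth_comb3 n (a b c : R) (f1 f2 f3 : 'rV[R]_n -> R) :
  smooth f1 -> smooth f2 -> smooth f3 ->
  smooth (fun y => a * f1 y + (b * f2 y + c * f3 y)).
Proof.
move=> s1 s2 s3 s; rewrite diter_comb3 //.
have -> : (fun y => a * diter s f1 y + (b * diter s f2 y + c * diter s f3 y)) =
   (a \*: diter s f1) + ((b \*: diter s f2) + (c \*: diter s f3)) by apply/funext.
split.
  move=> y; apply: continuousD; first exact: (continuousZl_tmp ((s1 s).1 y)).
  apply: continuousD; first exact: (continuousZl_tmp ((s2 s).1 y)).
  exact: (continuousZl_tmp ((s3 s).1 y)).
move=> i y.
have h1 := derivableP ((s1 s).2 i y).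
have h2 := derivableP ((s2 s).2 i y).
have h3 := derivableP ((s3 s).2 i y).
have := @is_deriveD _ _ _ _ _ y (ev R i) _ _ (is_deriveZ a h1)
          (is_deriveD (is_deriveZ b h2) (is_deriveZ c h3)).
by case.
Qed.

End Util2.

Section Main.
Variables (R : realType) (k1 k2 : nat) (G O : Type)
  (M : G -> 'rV[R]_k1 -> R) (N : O -> 'rV[R]_k2 -> R).
Hypothesis dM : defining_family M.
Hypothesis dN : defining_family N.

Let M0 : forall g x, 0 <= M g x := dM.1.
Let N0 : forall w y, 0 <= N w y := dN.1.

Definition TB (F : 'rV[R]_(k1 + k2) -> R) : Prop :=
  smooth F /\ forall g w (m : nat), exists S : R, forall z (s : seq 'I_(k1 + k2)),
    (size s <= m)%N -> M g (lsubmx z) * N w (rsubmx z) * `|diter s F z| <= S.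

Lemma TB_h h : inK (tensor_family M N) h -> TB h.
Proof.
case=> sh bh; split => // g w m.
have [S HS] := sem_ub _ _ _ _ (g, w) m h (bh (g, w) m).
exists S => z s hs.
rewrite (diter_pderiv _ _ h sh s).
by apply: (HS z (cnt _ s)); rewrite msize_cnt.
Qed.

Lemma TB_diter F s : TB F -> TB (diter s F).
Proof.
case=> sF bF; split; first exact: smooth_diter.
move=> g w m; have [S HS] := bF g w (m + size s)%N; exists S => z s' hs'.
by rewrite -diter_cat; apply: HS; rewrite size_cat leq_add2r.
Qed.

Lemma M_lower x : exists g (C d : R),
  [/\ 0 < C, 0 < d & forall x', `|x' - x| < d -> C <= M g x'].
Proof.
have [g [C [C0 hn]]] := dM.2.2.2.2.2 x.
case/nbhs_ballP: hn => d d0 hd; exists g, C, d; split => // x' hx'; apply: hd.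
by rewrite -ball_normE /= distrC.
Qed.

Lemma div_bound (a b c S : R) : 0 < c -> c <= a -> a * b <= S -> 0 <= b -> b <= S / c.
Proof.
move=> c0 ca h b0; rewrite ler_pdivlMr //.
apply: le_trans h; rewrite mulrC; exact: ler_wpM2r.
Qed.

Lemma part1 F : TB F -> forall x, inK N (fun y => F (row_mx x y)).
Proof.
move=> [sF bF] x; split; first exact: smooth_rowr.
move=> w m.
have [g [C [d [C0 d0 Hd]]]] := M_lower x.
have Cx : C <= M g x by apply: Hd; rewrite subrr normr0.
have [S HS] := bF g w m.
apply: (@le_lt_trans _ _ (S / C)%:E); last by rewrite ltry.
apply: sem_le => y nu hnu.
rewrite /pderiv diter_rowr.
apply: (div_bound (M g x)) => //; last by rewrite mulr_ge0.
rewrite mulrA.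
have := HS (row_mx x y) (map (@rshift k1 k2) (flatten [seq nseq (nu i) i | i <- enum 'I_k2])).
rewrite row_mxKl row_mxKr; apply.
by rewrite size_map size_canon.
Qed.

Variable v : ('rV[R]_k2 -> R) -> R.
Hypothesis vd : in_dual N v.

Lemma v_bound : exists (s : seq (O * nat)) (C : R), 0 <= C /\
  forall f (B : R), 0 <= B -> inK N f ->
  (forall p, List.In p s -> forall y nu, (msize nu <= p.2)%N ->
      N p.1 y * `|pderiv nu f y| <= B) -> `|v f| <= C * B.
Proof.
have [s [C [C0 H]]] := vd.2; exists s, C; split => // f B B0 Kf hb.
have h1 := H f Kf.
have h2 : (\big[Order.max/0%E]_(p <- s) seminorm N p.1 p.2 f <= B%:E)%E.
  elim: s hb {h1 H} => [|p s IH] hb; first by rewrite big_nil lee_fin.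
  rewrite big_cons ge_max; apply/andP; split.
    by apply: sem_le => y nu hnu; apply: hb => //=; left.
  by apply: IH => q qs; apply: hb; right.
rewrite -lee_fin EFinM; apply: le_trans h1 _; exact: lee_wpmul2l.
Qed.

Lemma v_zero f : inK N f -> inK N (fun _ => 0) /\ v (fun _ => 0) = 0.
Proof.
move=> Kf.
have e : (fun y => (-1) * f y + f y) = (fun _ => 0).
  by apply/funext => y; rewrite mulN1r addNr.
split; first by rewrite -e; apply: inK_comb.
by rewrite -e vd.1 // mulN1r addNr.
Qed.

Lemma v_lin3 (a b c : R) f1 f2 f3 : inK N f1 -> inK N f2 -> inK N f3 ->
  inK N (fun y => a * f1 y + (b * f2 y + c * f3 y)) /\
  v (fun y => a * f1 y + (b * f2 y + c * f3 y)) = a * v f1 + (b * v f2 + c * v f3).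
Proof.
move=> K1 K2 K3; have [K0 v0] := v_zero _ K1.
have e3 : (fun y => c * f3 y) = (fun y => c * f3 y + (fun _ => 0) y).
  by apply/funext => y; rewrite addr0.
have K3' : inK N (fun y => c * f3 y) by rewrite e3; apply: inK_comb.
have v3 : v (fun y => c * f3 y) = c * v f3 by rewrite e3 vd.1 // v0 addr0.
have K23 : inK N (fun y => b * f2 y + c * f3 y).
  exact: (inK_comb _ _ _ _ N0 b f2 (fun y => c * f3 y) K2 K3').
have v23 : v (fun y => b * f2 y + c * f3 y) = b * v f2 + c * v f3.
  by rewrite -v3; exact: (vd.1 b f2 (fun y => c * f3 y) K2 K3').
split; first exact: (inK_comb _ _ _ _ N0 a f1 _ K1 K23).
by rewrite -v23; exact: (vd.1 a f1 _ K1 K23).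
Qed.


Definition hv (F : 'rV[R]_(k1 + k2) -> R) : 'rV[R]_k1 -> R :=
  fun x => v (fun y => F (row_mx x y)).

Lemma small_mul (K a e : R) : 0 <= K -> 0 < e -> 0 <= a -> a < e / (K + 1) -> K * a < e.
Proof.
move=> K0 e0 a0; rewrite ltr_pdivlMr; last by rewrite ltr_wpDl.
apply: le_lt_trans; rewrite mulrC ler_wpM2l // lerDl //.
Qed.

Lemma deriv_key F (tb : TB F) x i : exists K : R, exists d : R, [/\ 0 <= K, 0 < d &
  forall t : R, t != 0 -> `|t| < d ->
   `|t^-1 * (hv F (t *: ev R i + x) - hv F x) - hv (pdiff (@lshift k1 k2 i) F) x|
     <= K * `|t|].
Proof.
set L := @lshift k1 k2 i.
have [s [Cv [Cv0 Hv]]] := v_bound.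
have [g [C [d [C0 d0 Hd]]]] := M_lower x.
pose Q := fun (p : O * nat) (S : R) => forall z (s' : seq 'I_(k1 + k2)),
   (size s' <= p.2 + 2)%N -> M g (lsubmx z) * N p.1 (rsubmx z) * `|diter s' F z| <= S.
have [S [S0 HS]] := uniform_bound R _ s Q
  (fun p S1 S2 le h z s' hs => le_trans (h z s' hs) le)
  (fun p => tb.2 g p.1 (p.2 + 2)%N).
exists (Cv * (S / C)), d; split => //; first by rewrite mulr_ge0 // divr_ge0 // ltW.
move=> t tn0 td.
set f1 := fun y => F (row_mx (t *: ev R i + x) y).
set f2 := fun y => F (row_mx x y).
set f3 := fun y => pdiff L F (row_mx x y).
have tb3 : TB (pdiff L F) := TB_diter F [:: L] tb.
have K1 : inK N f1 := part1 F tb _.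
have K2 : inK N f2 := part1 F tb _.
have K3 : inK N f3 := part1 _ tb3 _.
have [KD vD] := v_lin3 (t^-1) (- t^-1) (-1) f1 f2 f3 K1 K2 K3.
have -> : t^-1 * (hv F (t *: ev R i + x) - hv F x) - hv (pdiff L F) x =
    v (fun y => t^-1 * f1 y + (- t^-1 * f2 y + (-1) * f3 y)).
  rewrite vD /hv -/f1 -/f2 -/f3; ring.
rewrite -mulrA; apply: Hv => //.
  by rewrite mulr_ge0 // divr_ge0 // ltW.
move=> p ps y nu hnu.
rewrite /pderiv diter_comb3; [|exact: K1.1|exact: K2.1|exact: K3.1].
set c := flatten _.
rewrite /f1 /f2 /f3 !diter_rowr.
set Hc := diter (map (@rshift k1 k2) c) F.
have e3 : diter (map (@rshift k1 k2) c) (pdiff L F) = pdiff L Hc.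
  change (diter (map (@rshift k1 k2) c) (diter [:: L] F) = diter [:: L] Hc).
  rewrite /Hc -!diter_cat; apply: diter_perm; first exact: tb.1.
  by rewrite perm_catC perm_refl.
have sHc : smooth Hc by apply: smooth_diter; exact: tb.1.
set z := row_mx x y.
have ez : row_mx (t *: ev R i + x) y = z + t *: ev R L by rewrite rowl_shift addrC.
rewrite ez e3.
have -> : t^-1 * Hc (z + t *: ev R L) + (- t^-1 * Hc z + -1 * pdiff L Hc z) =
    t^-1 * (Hc (z + t *: ev R L) - Hc z - t * pdiff L Hc z).
  by rewrite !mulrBr mulrA mulVf // mul1r; ring.
have tn : `|t| != 0 by rewrite normr_eq0.
rewrite normrM normfV mulrCA.
have hb : forall s0, `|s0| <= `|t| ->
    N p.1 y * `|pdiff L (pdiff L Hc) (z + s0 *: ev R L)| <= S / C.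
  move=> s0 hs0.
  have ez0 : z + s0 *: ev R L = row_mx (s0 *: ev R i + x) y by rewrite rowl_shift addrC.
  rewrite ez0; apply: (div_bound (M g (s0 *: ev R i + x))) => //.
  - apply: Hd; rewrite addrK normrZ.
    apply: le_lt_trans td; apply: le_trans hs0.
    by rewrite -[leRHS]mulr1 ler_wpM2l // norm_ev.
  - rewrite mulrA.
    have := HS p ps (row_mx (s0 *: ev R i + x) y) (L :: L :: map (@rshift k1 k2) c).
    rewrite row_mxKl row_mxKr; apply.
    by rewrite /= size_map /c size_canon -(addn2 (msize nu)) leq_add2r.
  - by rewrite mulr_ge0.
have := taylor2 R (k1 + k2) Hc sHc L z (N p.1 y) t (S / C) (N0 _ _) hb.
move=> T2.
have tpos : 0 <= `|t|^-1 by rewrite invr_ge0.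
apply: le_trans (ler_wpM2l tpos T2) _.
by rewrite (mulrCA (`|t|^-1)) (mulrA (`|t|^-1)) mulVf // mul1r.
Qed.


Lemma deriv_v F (tb : TB F) x i : derivable (hv F) x (ev R i) /\
  'D_(ev R i) (hv F) x = hv (pdiff (@lshift k1 k2 i) F) x.
Proof.
have [K [d [K0 d0 HK]]] := deriv_key F tb x i.
have cv : (fun h : R => h^-1 *: ((hv F \o shift x) (h *: ev R i) - hv F x))
    @ (0 : R)^' --> hv (pdiff (@lshift k1 k2 i) F) x.
  apply/cvgrPdist_lt => e e0.
  have r0 : 0 < Num.min d (e / (K + 1)).
    by rewrite lt_min d0 divr_gt0 // ltr_wpDl.
  apply/nbhs_ballP; exists (Num.min d (e / (K + 1))) => // t.
  rewrite -ball_normE /= sub0r normrN => ht tn0.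
  rewrite distrC.
  have htd : `|t| < d by apply: lt_le_trans ht _; rewrite ge_min lexx.
  have hte : `|t| < e / (K + 1) by apply: lt_le_trans ht _; rewrite ge_min lexx orbT.
  apply: le_lt_trans (HK t tn0 htd) _.
  exact: (small_mul K `|t| e K0 e0 (normr_ge0 _) hte).
split; first exact: cvgP cv.
exact: cvg_lim cv.
Qed.

Lemma cont_v F (tb : TB F) : continuous (hv F).
Proof.
move=> x; apply/(@cvgrPdist_lt _ _ _ (nbhs x) (nbhs_filter x)) => e e0.
have [s [Cv [Cv0 Hv]]] := v_bound.
have [g [C [d [C0 d0 Hd]]]] := M_lower x.
pose Q := fun (p : O * nat) (S : R) => forall z (s' : seq 'I_(k1 + k2)),
   (size s' <= p.2 + 2)%N -> M g (lsubmx z) * N p.1 (rsubmx z) * `|diter s' F z| <= S.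
have [S [S0 HS]] := uniform_bound R _ s Q
  (fun p S1 S2 le h z s' hs => le_trans (h z s' hs) le)
  (fun p => tb.2 g p.1 (p.2 + 2)%N).
have SC : 0 <= S / C by rewrite divr_ge0 // ltW.
pose K := Cv * (k1%:R * (S / C)).
have K0 : 0 <= K by rewrite mulr_ge0 // mulr_ge0.
have k0 : 0 < (k1.+1)%:R :> R by rewrite ltr0n.
pose r := Num.min (d / 2 / (k1.+1)%:R) (e / (K + 1)).
have r0 : 0 < r.
  by rewrite lt_min !divr_gt0 // ltr_wpDl.
apply/nbhs_ballP; exists r => // x'.
rewrite -ball_normE /= distrC => hx'.
have hx1 : `|x' - x| <= d / 2 / (k1.+1)%:R.
  by apply: ltW; apply: lt_le_trans hx' _; rewrite ge_min lexx.
have hx2 : `|x' - x| < e / (K + 1).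
  by apply: lt_le_trans hx' _; rewrite ge_min lexx orbT.
set f1 := fun y => F (row_mx x' y).
set f2 := fun y => F (row_mx x y).
have K1 : inK N f1 := part1 F tb _.
have K2 : inK N f2 := part1 F tb _.
have KD := inK_comb _ _ _ _ N0 (-1) f2 f1 K2 K1.
have vD := vd.1 (-1) f2 f1 K2 K1.
have -> : hv F x - hv F x' = - v (fun y => (-1) * f2 y + f1 y).
  rewrite vD /hv -/f1 -/f2; ring.
rewrite normrN.
apply: le_lt_trans (Hv _ (k1%:R * (S / C) * `|x' - x|) _ KD _) _.
- by rewrite mulr_ge0 // mulr_ge0.
- move=> p ps y nu hnu.
  rewrite /pderiv diter_comb; [|exact: K2.1|exact: K1.1].
  set c := flatten _.
  rewrite /f1 /f2 !diter_rowr.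
  set Hc := diter (map (@rshift k1 k2) c) F.
  have sHc : smooth Hc by apply: smooth_diter; exact: tb.1.
  have -> : (-1) * Hc (row_mx x y) + Hc (row_mx x' y) = Hc (row_mx x' y) - Hc (row_mx x y).
    by ring.
  apply: (path_bound R k1 k2 Hc sHc x y (N p.1 y) (S / C) (d / 2)) => //.
    move=> q l hq; apply: (div_bound (M g q)) => //.
    + apply: Hd; apply: le_lt_trans hq _; rewrite ltr_pdivrMr // ltr_pMr //.
      by rewrite ltr1n.
    + rewrite mulrA.
      have := HS p ps (row_mx q y) (@lshift k1 k2 l :: map (@rshift k1 k2) c).
      rewrite row_mxKl row_mxKr; apply.
      by rewrite /= size_map /c size_canon -(addn1 (msize nu)) leq_add.
    + by rewrite mulr_ge0.
  by rewrite mulrC -ler_pdivlMr.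
- have -> : Cv * (k1%:R * (S / C) * `|x' - x|) = K * `|x' - x| by rewrite /K !mulrA.
  exact: (small_mul K _ e K0 e0 (normr_ge0 _) hx2).
Qed.


Lemma hv_diter F (tb : TB F) s : diter s (hv F) = hv (diter (map (@lshift k1 k2) s) F).
Proof.
elim: s => //= i s IH; rewrite IH; apply/funext => x.
exact: (deriv_v _ (TB_diter F _ tb) x i).2.
Qed.

Lemma main_v h : inK (tensor_family M N) h ->
  inK M (hv h) /\ forall mu x,
    pderiv mu (hv h) x = v (fun y => pderiv mu (fun x' => h (row_mx x' y)) x).
Proof.
move=> Kh; have tb := TB_h h Kh.
split; first split.
- move=> s; rewrite hv_diter //; split; first exact: cont_v (TB_diter _ _ tb).
  by move=> i x; exact: (deriv_v _ (TB_diter _ _ tb) x i).1.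
- move=> g m.
  have [s [Cv [Cv0 Hv]]] := v_bound.
  pose Q := fun (p : O * nat) (S : R) => forall z (s' : seq 'I_(k1 + k2)),
     (size s' <= p.2 + m)%N -> M g (lsubmx z) * N p.1 (rsubmx z) * `|diter s' h z| <= S.
  have [S [S0 HS]] := uniform_bound R _ s Q
    (fun p S1 S2 le h' z s' hs => le_trans (h' z s' hs) le)
    (fun p => tb.2 g p.1 (p.2 + m)%N).
  apply: (@le_lt_trans _ _ (Cv * S)%:E); last by rewrite ltry.
  apply: sem_le => x mu hmu.
  rewrite /pderiv hv_diter //.
  set c := flatten _.
  set F := diter (map (@lshift k1 k2) c) h.
  have [->|Mx0] := eqVneq (M g x) 0; first by rewrite mul0r mulr_ge0.
  have Mp : 0 < M g x by rewrite lt_def Mx0 M0.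
  have tbF : TB F := TB_diter _ _ tb.
  apply: le_trans (ler_wpM2l (M0 g x) (Hv _ (S / M g x) _ (part1 F tbF x) _)) _.
  + by rewrite divr_ge0 // ltW.
  + move=> p ps y nu hnu.
    rewrite /pderiv diter_rowr /F -diter_cat.
    apply: (div_bound (M g x)) => //; last by rewrite mulr_ge0.
    rewrite mulrA.
    have := HS p ps (row_mx x y)
      (map (@rshift k1 k2) (flatten [seq nseq (nu i) i | i <- enum 'I_k2]) ++
       map (@lshift k1 k2) c).
    rewrite row_mxKl row_mxKr; apply.
    by rewrite size_cat !size_map /c !size_canon leq_add.
  + by rewrite mulrCA (mulrCA (M g x)) mulfV ?mulr1 // gt_eqF.
- move=> mu x; rewrite /pderiv hv_diter // /hv.
  congr v; apply/funext => y.
  by rewrite diter_rowl.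
Qed.

End Main.

Theorem lemma3p5 (R : realType) (k1 k2 : nat) (G O : Type)
    (M : G -> 'rV[R]_k1 -> R) (N : O -> 'rV[R]_k2 -> R)
    (h : 'rV[R]_(k1 + k2) -> R) :
  defining_family M -> defining_family N ->
  inK (tensor_family M N) h ->
  condI N -> condII N ->
  (forall x : 'rV[R]_k1, inK N (fun y => h (row_mx x y))) /\
  (forall v : ('rV[R]_k2 -> R) -> R, in_dual N v ->
     inK M (fun x => v (fun y => h (row_mx x y))) /\
     forall (mu : mindex k1) (x : 'rV[R]_k1),
       pderiv mu (fun x' => v (fun y => h (row_mx x' y))) x =
       v (fun y => pderiv mu (fun x' => h (row_mx x' y)) x)).
Proof.
move=> dM dN Kh _ _; split.
  by move=> x; apply: (part1 R k1 k2 G O M N dM dN); apply: TB_h.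
move=> v vd.
exact: (main_v R k1 k2 G O M N dM dN v vd h Kh).
Qed.
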